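(* Let $q$ be a prime power, $r\mid(q-1)$ with $r\ge3$, $q/2\le \ell\le q-1$, and $s\mid (q-1)/r$. The folded quantum Tamo–Barg code with parameters $q,r,\ell,s$ is a quantum locally recoverable code with locality $r$.
   Context: $[n]=\{0,\dots,n-1\}$, $\mathbb{F}_q^*=\mathbb{F}_q\setminus\{0\}$. For $S\subseteq\mathbb{Z}_{\ge0}$, $\mathbb{F}_q[X]^S=\{\sum_{i\in S}a_iX^i\}$, $\mathrm{ev}(f)=(f(x))_{x\in\mathbb{F}_q^*}$. Let $S=\{i\in[\ell]:i\not\equiv r-1\pmod r\}\cup\{i\in[q-1]:i\equiv1\pmod r\}$, $C=\mathrm{ev}(\mathbb{F}_q[X]^S)$; for $\ell\ge q/2$, $C^\perp\subseteq C$ and the quantum Tamo–Barg code is $\mathrm{CSS}(C,C)=\mathrm{span}\{\sum_{y\in C^\perp}|x+y\rangle:x\in C\}\subseteq(\mathbb{C}^q)^{\otimes(q-1)}$, qudits indexed by $\mathbb{F}_q^*$. Folding: fix a generator $\omega$ of $\mathbb{F}_q^*$ and for $i\in[(q-1)/s]$ group the $s$ qudits at positions $\{\omega^{si},\omega^{si+1},\dots,\omega^{si+s-1}\}$ into a single qudit of local dimension $q^s$; the resulting code of block length $(q-1)/s$ is the folded quantum Tamo–Barg code. A quantum code on qudit set $Q$ is locally recoverable with locality $r$ if for each $i\in Q$ there is $I_i\subseteq Q$ with $i\in I_i$, $|I_i|\le r$, and a quantum channel $\mathrm{Rec}_i$ from qudits $I_i\setminus\{i\}$ to qudits $I_i$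 with $(\mathrm{Rec}_i\otimes\mathrm{id})(\psi_{Q\setminus\{i\}})=\psi$ for every code state $\psi$. *)

(* Defs.v *)
From mathcomp Require Import all_boot all_order all_algebra all_field.
Set Implicit Arguments. Unset Strict Implicit. Unset Printing Implicit Defensive.
Import Order.TTheory GRing.Theory Num.Theory.
Local Open Scope ring_scope.

(* Qudit positions Q (finite), each qudit has local basis indexed by F    *)
(* (local dimension |F| = q).  Computational basis states of the whole    *)
(* system are words x : Q -> F; vectors / operators have entries in a    *)
(* numeric closed field Cf (e.g. the complex numbers).                   *)
Section Qudits.
Variables (F : finFieldType) (Q : finType) (Cf : numClosedFieldType).

Definition word := {ffun Q -> F}.
Definition qvec := word -> Cf.
Definition qop := word -> word -> Cf.

(* x is a basis configuration of the subsystem S (zero outside S). *)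
Definition onS (S : {set Q}) (x : word) : bool :=
  [forall j, (j \notin S) ==> (x j == 0)].

Definition glue (S : {set Q}) (x y : word) : word :=
  [ffun j => if j \in S then x j else y j].

Definition restr (S : {set Q}) (x : word) : word := glue S x [ffun=> 0].

(* partial trace over the qudits in B: the result is an operator on the
   qudits in ~: B (its value does not depend on the B-entries of x, y). *)
Definition ptrace (B : {set Q}) (rho : qop) : qop :=
  fun x y => \sum_(z : word | onS B z) rho (glue B z x) (glue B z y).

(* Kraus operators K k : (qudits A) -> (qudits E), K k u a with u on E, a on A;
   trace preservation: sum_k K_k^dagger K_k = id on the qudits A. *)
Definition kraus_tp (A E : {set Q}) (n : nat) (K : 'I_n -> qop) : Prop :=
  forall a a', onS A a -> onS A a' ->
    \sum_(k < n) \sum_(u : word | onS E u) (K k u a)^* * K k u a'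
      = (a == a')%:R.

(* (Rec tensor id)(sigma), where Rec has Kraus operators K from qudits A to
   qudits E, sigma is an operator on qudits (~: B) with A \subset ~: B,
   and id acts on the remaining qudits ~: E. *)
Definition apply_rec_id (A E : {set Q}) (n : nat) (K : 'I_n -> qop)
    (sigma : qop) : qop :=
  fun x x' => \sum_(k < n) \sum_(a : word | onS A a) \sum_(a' : word | onS A a')
     K k (restr E x) a * sigma (glue A a x) (glue A a' x') * (K k (restr E x') a')^*.

Definition density (rho : qop) : Prop :=
  [/\ forall x y, rho y x = (rho x y)^*,
      forall v : qvec, 0 <= \sum_x \sum_y (v x)^* * rho x y * v y
    & \sum_x rho x x = 1].

Definition dual (Ccl : {set word}) : {set word} :=
  [set y : word | [forall c in Ccl, \sum_j c j * y j == 0]].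

Definition inCSS (C1 C2 : {set word}) (v : qvec) : Prop :=
  exists alpha : word -> Cf, forall w,
    v w = \sum_(x in C1) alpha x * \sum_(y in dual C2) (w == x + y)%:R.

Definition code_state (code : qvec -> Prop) (rho : qop) : Prop :=
  density rho /\ forall y, code (fun x => rho x y).

End Qudits.

Section TamoBarg.
Variables (F : finFieldType) (r l : nat).

Definition Fstar := {x : F | x != 0}.

Definition TB_S (i : nat) : bool :=
  (((i < l) && (i %% r != r.-1)) || ((i < #|F|.-1) && (i %% r == 1)))%N.

(* C = ev(F_q[X]^S); since S \subset [q-1] a polynomial in F_q[X]^S is
   sum_{i < q-1, i in S} a_i X^i. *)
Definition TB_code : {set word F Fstar} :=
  [set c : word F Fstar | [exists a : {ffun 'I_(#|F|.-1) -> F},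
      [forall i : 'I_(#|F|.-1), (~~ TB_S i) ==> (a i == 0)] &&
      (c == [ffun p : Fstar => \sum_(i < #|F|.-1) a i * (val p) ^+ i])]].

Definition quantumTB (Cf : numClosedFieldType) : qvec F Fstar Cf -> Prop :=
  inCSS TB_code TB_code.

Definition fold_region (w : F) (s : nat) (I : {set 'I_(#|F|.-1 %/ s)}) : {set Fstar} :=
  [set p : Fstar | [exists i in I, exists t : 'I_s, val p == w ^+ (s * i + t)%N]].

Arguments fold_region w s I : clear implicits.

Definition folded_TB_QLRC (Cf : numClosedFieldType) (w : F) (s : nat) : Prop :=
  forall i : 'I_(#|F|.-1 %/ s), exists I : {set 'I_(#|F|.-1 %/ s)},
    [/\ i \in I, (#|I| <= r)%N &
      exists (n : nat) (K : 'I_n -> qop F Fstar Cf),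
        kraus_tp (fold_region w s (I :\ i)) (fold_region w s I) K /\
        forall rho, code_state (@quantumTB Cf) rho ->
          forall x x', apply_rec_id (fold_region w s (I :\ i)) (fold_region w s I) K
                         (ptrace (fold_region w s [set i]) rho) x x' = rho x x'].
End TamoBarg.

(* Main.v *)
Require Import Defs.
From mathcomp Require Import all_boot all_order all_algebra all_field.
From mathcomp Require Import ring zify.
Set Implicit Arguments. Unset Strict Implicit. Unset Printing Implicit Defensive.
Import Order.TTheory GRing.Theory Num.Theory.
Local Open Scope ring_scope.

Lemma sum_enum (T : finType) (R : nmodType) (G : T -> R) : \sum_(i < #|T|) G (enum_val i) = \sum_k G k.
Proof. by rewrite -(big_enum_val (A := T)). Qed.
Lemma sum_cnt (T : finType) (P : pred T) : \sum_k (P k : nat) = #|[set k | P k]|.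
Proof. by rewrite -sum1_card [RHS]big_mkcond /=; apply: eq_bigr => k _; rewrite inE; case: (P k). Qed.

Section Abs.
Variables (F : finFieldType) (Q : finType) (Cf : numClosedFieldType).
Local Notation wd := (word F Q).
Variable C : {set wd}.

Definition dot (x y : wd) : F := \sum_j x j * y j.

Lemma dual_dot c y : c \in C -> y \in dual C -> dot c y = 0.
Proof. by move=> cC; rewrite inE => /forall_inP /(_ c cC) /eqP. Qed.

Lemma dotDl x y z : dot (x + y) z = dot x z + dot y z.
Proof. by rewrite /dot -big_split; apply: eq_bigr => j _; rewrite ffunE mulrDl. Qed.

Lemma dotNl x z : dot (- x) z = - dot x z.
Proof. by rewrite /dot -sumrN; apply: eq_bigr => j _; rewrite ffunE mulNr. Qed.

Lemma dotC x y : dot x y = dot y x.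
Proof. by apply: eq_bigr => j _; rewrite mulrC. Qed.

Lemma dualD y d : y \in dual C -> d \in dual C -> y + d \in dual C.
Proof.
move=> yD dD; rewrite inE; apply/forall_inP => c cC.
have := dual_dot cC yD; have := dual_dot cC dD.
move=> h1 h2; have -> : \sum_j c j * (y + d) j = dot c (y + d) by [].
by rewrite dotC dotDl -!(dotC c) h1 h2 addr0.
Qed.

Lemma dualN y : y \in dual C -> - y \in dual C.
Proof.
move=> yD; rewrite inE; apply/forall_inP => c cC.
have := dual_dot cC yD.
have -> : \sum_j c j * (- y) j = dot c (- y) by [].
by rewrite (dotC c (- y)) dotNl dotC => ->; rewrite oppr0.
Qed.

Lemma sum_ind_dual (t : wd) :
  \sum_(y in dual C) ((y == t)%:R : Cf) = (t \in dual C)%:R.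
Proof.
case: (boolP (t \in dual C)) => tD.
  rewrite (bigD1 t) //= eqxx big1 ?addr0 // => y /andP[_ /negbTE ->] //.
by rewrite big1 // => y yD; case: eqP => // eyt; rewrite -eyt yD in tD.
Qed.

Lemma inCSS_form (v : qvec F Q Cf) : inCSS C C v ->
  exists alpha : wd -> Cf, forall w, v w = \sum_(x in C) alpha x * ((w - x) \in dual C)%:R.
Proof.
case=> alpha Hv; exists alpha => w; rewrite Hv; apply: eq_bigr => x _; congr (_ * _).
rewrite -sum_ind_dual; apply: eq_bigr => y _.
by congr (_%:R); rewrite [in RHS]eq_sym subr_eq addrC.
Qed.

Lemma inCSS_inv (v : qvec F Q Cf) w d : inCSS C C v -> d \in dual C -> v (w + d) = v w.
Proof.
move=> /inCSS_form [alpha Hv] dD; rewrite !Hv; apply: eq_bigr => x _; congr (_ * _%:R).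
have -> : w + d - x = (w - x) + d by rewrite addrAC.
congr (nat_of_bool _).
case: (boolP (w - x \in dual C)) => H; first by rewrite (dualD H dD).
apply: negbTE; apply: contra H => H'.
by have := dualD H' (dualN dD); rewrite addrK.
Qed.

Lemma inCSS_supp (v : qvec F Q Cf) w g : inCSS C C v -> g \in C -> g \in dual C ->
  dot w g != 0 -> v w = 0.
Proof.
move=> /inCSS_form [alpha Hv] gC gD nz; rewrite Hv big1 // => x xC.
case: (boolP (w - x \in dual C)) => H; last by rewrite mulr0.
have : dot w g = 0.
  have -> : w = x + (w - x) by rewrite addrC subrK.
  by rewrite dotDl (dual_dot xC gD) add0r dotC (dual_dot gC H).
by move/eqP; rewrite (negbTE nz).
Qed.

Lemma cs_inv1 (rho : qop F Q Cf) x y d : code_state (inCSS C C) rho -> d \in dual C ->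
  rho (x + d) y = rho x y.
Proof. by case=> _ H dD; exact: (inCSS_inv x (H y) dD). Qed.

Lemma cs_inv2 (rho : qop F Q Cf) x y d : code_state (inCSS C C) rho -> d \in dual C ->
  rho x (y + d) = rho x y.
Proof.
move=> cs dD; have [[herm _ _] _] := cs.
by rewrite herm (cs_inv1 _ _ cs dD) -herm.
Qed.

Lemma cs_supp1 (rho : qop F Q Cf) x y g : code_state (inCSS C C) rho -> g \in C -> g \in dual C ->
  dot x g != 0 -> rho x y = 0.
Proof. by case=> _ H gC gD nz; exact: (inCSS_supp (H y) gC gD nz). Qed.

Lemma cs_supp2 (rho : qop F Q Cf) x y g : code_state (inCSS C C) rho -> g \in C -> g \in dual C ->
  dot y g != 0 -> rho x y = 0.
Proof.
move=> cs gC gD nz; have [[herm _ _] _] := cs.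
by rewrite herm (cs_supp1 _ cs gC gD nz) conjC0.
Qed.


Lemma onSP (S : {set Q}) (x : wd) j : onS S x -> j \notin S -> x j = 0.
Proof. by move=> /forallP /(_ j) /implyP H jS; apply/eqP; apply: H. Qed.

Lemma onS_restr (S : {set Q}) (x : wd) : onS S (restr S x).
Proof. by apply/forallP => j; apply/implyP => jS; rewrite !ffunE (negbTE jS). Qed.

Lemma glueE (S : {set Q}) (x y : wd) j : glue S x y j = if j \in S then x j else y j.
Proof. by rewrite ffunE. Qed.

Lemma restrE (S : {set Q}) (x : wd) j : restr S x j = if j \in S then x j else 0.
Proof. by rewrite /restr glueE ffunE. Qed.

Variables (A B E : {set Q}) (h : Q -> wd).
Hypotheses (hA : A = E :\: B) (hBE : B \subset E)
  (hC : forall b, b \in B -> h b \in C) (hD : forall b, b \in B -> h b \in dual C)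
  (hsupp : forall b j, b \in B -> j \notin E -> h b j = 0)
  (hbb : forall b, b \in B -> h b b != 0)
  (hbb' : forall b b', b \in B -> b' \in B -> b' != b -> h b b' = 0).

Definition chk (u : wd) : bool := [forall b in B, dot u (h b) == 0].
Definition corr (k u : wd) : wd := [ffun j => \sum_(b in B) (k b - u b) / h b b * h b j].
Definition Tm (k u : wd) : wd := [ffun j => if j \in A then u j + corr k u j else 0].
Definition NB := #|[set z : wd | onS B z]|.
Definition cc : Cf := sqrtC (NB%:R^-1).
Definition Kr (k u a : wd) : Cf := cc * (onS B k && chk u && (a == Tm k u))%:R.
Definition Kops : 'I_#|wd| -> qop F Q Cf := fun i => Kr (enum_val i).

Lemma AE j : j \in A -> j \in E.
Proof. by rewrite hA inE => /andP[]. Qed.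
Lemma AB j : j \in A -> j \notin B.
Proof. by rewrite hA inE => /andP[]. Qed.
Lemma BE j : j \in B -> j \in E.
Proof. by move=> jB; apply: (subsetP hBE). Qed.
Lemma notAB j : j \notin A -> j \notin B -> j \notin E.
Proof. by rewrite hA inE negb_and negbK => /orP[->|->]. Qed.

Lemma dot_onB (v : wd) b : (forall j, j \notin B -> v j = 0) -> b \in B ->
  dot v (h b) = v b * h b b.
Proof.
move=> Hv bB; rewrite /dot (bigD1 b) //= big1 ?addr0 // => j /negbTE jb.
case: (boolP (j \in B)) => jB; last by rewrite Hv // mul0r.
by rewrite hbb' ?mulr0 // jb.
Qed.

Lemma dot_lin (x : wd) (lam : Q -> F) :
  dot x [ffun j => \sum_(b in B) lam b * h b j] = \sum_(b in B) lam b * dot x (h b).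
Proof.
rewrite /dot; under eq_bigr do rewrite ffunE mulr_sumr.
rewrite exchange_big; apply: eq_bigr => b _; rewrite mulr_sumr.
by apply: eq_bigr => j _; rewrite mulrCA.
Qed.

Lemma corr_dual k u : corr k u \in dual C.
Proof.
rewrite inE; apply/forall_inP => c cC.
have -> : \sum_j c j * (corr k u) j = dot c (corr k u) by [].
by rewrite dot_lin big1 // => b bB; rewrite (dual_dot cC (hD bB)) mulr0.
Qed.

Lemma dot_corr k u b : b \in B -> dot (corr k u) (h b) = 0.
Proof.
move=> bB; rewrite dotC dot_lin big1 // => b' b'B.
by rewrite (dual_dot (hC bB) (hD b'B)) mulr0.
Qed.

Lemma corr_B k u j : j \in B -> corr k u j = k j - u j.
Proof.
move=> jB; rewrite ffunE (bigD1 j) //= big1 ?addr0 ?divfK ?hbb //.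
by move=> b /andP[bB bj]; rewrite (hbb' bB jB) ?mulr0 // eq_sym.
Qed.

Lemma corr_out k u j : j \notin E -> corr k u j = 0.
Proof. by move=> jE; rewrite ffunE; apply: big1 => b bB; rewrite (hsupp bB jE) mulr0. Qed.

Lemma corr_eqB k (u v : wd) : (forall b, b \in B -> u b = v b) -> corr k u = corr k v.
Proof.
by move=> H; apply/ffunP => j; rewrite !ffunE; apply: eq_bigr => b bB; rewrite H.
Qed.

Lemma chk_restr x : chk (restr E x) = chk x.
Proof.
apply: eq_forallb_in => b bB; congr (_ == 0); apply: eq_bigr => j _.
by rewrite restrE; case: ifP => // /negbT jE; rewrite (hsupp bB jE) !mulr0.
Qed.

Lemma chk_corr k u : chk (u + corr k u) = chk u.
Proof.
by apply: eq_forallb_in => b bB; rewrite dotDl dot_corr // addr0.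
Qed.


Lemma addE (u v : wd) j : (u + v) j = u j + v j.
Proof. by rewrite ffunE. Qed.

Definition dl (z k : wd) : wd := [ffun j => if j \in B then z j - k j else 0].

Lemma corr_restr k x : corr k (restr E x) = corr k x.
Proof. by apply: corr_eqB => b bB; rewrite restrE BE. Qed.

Lemma glue_decomp z k x :
  glue B z (glue A (Tm k (restr E x)) x) = (x + dl z k) + corr k x.
Proof.
apply/ffunP => j; rewrite !addE glueE [dl z k j]ffunE.
case: (boolP (j \in B)) => jB.
  by rewrite corr_B //; ring.
rewrite glueE; case: (boolP (j \in A)) => jA.
  by rewrite ffunE jA corr_restr restrE AE // addr0.
by rewrite corr_out ?notAB // !addr0.
Qed.

Lemma dot_dl z k b : b \in B -> dot (dl z k) (h b) = (z b - k b) * h b b.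
Proof.
move=> bB; rewrite (dot_onB _ bB) ?ffunE ?bB // => j jB.
by rewrite ffunE (negbTE jB).
Qed.

Lemma dl0 k : dl k k = 0.
Proof. by apply/ffunP => j; rewrite !ffunE subrr; case: ifP. Qed.

Lemma onS_neq (z k : wd) : onS B z -> onS B k -> z != k ->
  exists2 b, b \in B & z b != k b.
Proof.
move=> zB kB zk.
case: (pickP [pred b | (b \in B) && (z b != k b)]) => [b /andP[]|H]; first by exists b.
case/eqP: zk; apply/ffunP => j; case jB: (j \in B).
  by have := H j; rewrite /= jB /= => /negbFE /eqP.
by rewrite (onSP zB (negbT jB)) (onSP kB (negbT jB)).
Qed.

Lemma ptrace_key (rho : qop F Q Cf) x y k : code_state (inCSS C C) rho ->
  chk x -> chk y -> onS B k ->
  ptrace B rho (glue A (Tm k (restr E x)) x) (glue A (Tm k (restr E y)) y) = rho x y.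
Proof.
move=> cs cx cy kB; rewrite /ptrace (bigD1 k) //= big1 => [|z /andP[zB zk]].
  by rewrite !glue_decomp (cs_inv1 _ _ cs (corr_dual _ _)) (cs_inv2 _ _ cs (corr_dual _ _)) dl0 !addr0.
rewrite !glue_decomp (cs_inv1 _ _ cs (corr_dual _ _)) (cs_inv2 _ _ cs (corr_dual _ _)).
have [b bB nb] := onS_neq zB kB zk.
apply: (cs_supp1 _ cs (hC bB) (hD bB)).
rewrite dotDl dot_dl // (eqP (forall_inP cx b bB)) add0r mulf_neq0 ?hbb //.
by rewrite subr_eq0.
Qed.

Lemma onS_Tm k u : onS A (Tm k u).
Proof. by apply/forallP => j; apply/implyP => jA; rewrite ffunE (negbTE jA). Qed.

Lemma Kr_T k u : Kr k u (Tm k u) = cc * (onS B k && chk u)%:R.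
Proof. by rewrite /Kr eqxx andbT. Qed.

Lemma inner k x y (sig : qop F Q Cf) :
  \sum_(a | onS A a) \sum_(a' | onS A a') Kr k (restr E x) a * sig (glue A a x) (glue A a' y)
      * (Kr k (restr E y) a')^* =
  Kr k (restr E x) (Tm k (restr E x)) * sig (glue A (Tm k (restr E x)) x) (glue A (Tm k (restr E y)) y)
      * (Kr k (restr E y) (Tm k (restr E y)))^*.
Proof.
rewrite (bigD1 (Tm k (restr E x))) ?onS_Tm //= [X in _ + X]big1 ?addr0.
  rewrite (bigD1 (Tm k (restr E y))) ?onS_Tm //= big1 ?addr0 // => a' /andP[_ aT'].
  by rewrite /Kr (negbTE aT') andbF mulr0 conjC0 mulr0.
move=> a /andP[_ aT]; apply: big1 => a' _.
by rewrite /Kr (negbTE aT) andbF mulr0 !mul0r.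
Qed.

Lemma NB_gt0 : (0 < NB)%N.
Proof.
apply/card_gt0P; exists 0; rewrite inE.
by apply/forallP => j; apply/implyP => _; rewrite ffunE.
Qed.

Lemma cc_conj : cc^* = cc.
Proof. by apply: geC0_conj; rewrite sqrtC_ge0 invr_ge0 ler0n. Qed.

Lemma cc_sq : cc * cc = NB%:R^-1.
Proof. by rewrite -expr2 sqrtCK. Qed.

Lemma NB_neq0 : (NB%:R : Cf) != 0.
Proof. by rewrite pnatr_eq0 -lt0n NB_gt0. Qed.

Lemma rec_correct (rho : qop F Q Cf) : code_state (inCSS C C) rho ->
  forall x y, apply_rec_id A E Kops (ptrace B rho) x y = rho x y.
Proof.
move=> cs x y; rewrite /apply_rec_id /Kops.
rewrite (sum_enum (fun k => \sum_(a | onS A a) \sum_(a' | onS A a') Kr k (restr E x) a * ptrace B rho (glue A a x) (glue A a' y) * (Kr k (restr E y) a')^*)).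
under eq_bigr => k _ do rewrite inner !Kr_T !chk_restr.
case: (boolP (chk x)) => cx; last first.
  move/forall_inPn: cx => [b bB nb].
  rewrite (cs_supp1 _ cs (hC bB) (hD bB) nb) big1 // => k _.
  by rewrite andbF mulr0 !mul0r.
case: (boolP (chk y)) => cy; last first.
  move/forall_inPn: cy => [b bB nb].
  rewrite (cs_supp2 _ cs (hC bB) (hD bB) nb) big1 // => k _.
  by rewrite andbF mulr0 conjC0 mulr0.
rewrite (eq_bigr (fun k => (onS B k : nat)%:R * (cc * cc * rho x y))); last first.
  move=> k _; rewrite !andbT; case: (boolP (onS B k)) => kB; last by rewrite mulr0 !mul0r.
  by rewrite ptrace_key // rmorphM /= cc_conj conjC_nat !mulr1 mul1r mulrAC.
by rewrite -big_distrl /= -natr_sum sum_cnt -/NB cc_sq mulrA mulfV ?NB_neq0 // mul1r.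
Qed.

Definition Phi (k a z : wd) : wd :=
  [ffun j => if j \in B then z j else if j \in A then a j - corr k z j else 0].
Definition k0 (a : wd) : wd := [ffun j => if j \in B then - dot a (h j) / h j j else 0].

Lemma BnA j : j \in B -> j \notin A.
Proof. by move=> jB; apply/negP => /AB; rewrite jB. Qed.

Lemma glueT k u : onS E u -> glue B k (Tm k u) = u + corr k u.
Proof.
move=> uE; apply/ffunP => j; rewrite glueE addE; case jB: (j \in B).
  by rewrite corr_B // addrC subrK.
rewrite ffunE; case jA: (j \in A) => //.
by rewrite (onSP uE) ?corr_out ?addr0 // notAB ?jA ?jB.
Qed.

Lemma dot_glue k a b : onS A a -> b \in B ->
  dot (glue B k a) (h b) = dot a (h b) + k b * h b b.
Proof.
move=> aA bB.
have -> : glue B k a = a + restr B k.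
  apply/ffunP => j; rewrite glueE addE restrE; case jB: (j \in B).
    by rewrite (onSP aA) ?add0r // BnA.
  by rewrite addr0.
rewrite dotDl (dot_onB (v := restr B k)) ?restrE ?bB // => j jB'.
by rewrite restrE (negbTE jB').
Qed.

Lemma chk_glue_k0 k a : onS A a -> onS B k -> chk (glue B k a) = (k == k0 a).
Proof.
move=> aA kB; apply/forall_inP/eqP => [H|->].
  apply/ffunP => j; rewrite ffunE; case jB: (j \in B); last by rewrite (onSP kB) ?jB.
  move: (H j jB); rewrite dot_glue // addrC addr_eq0 => /eqP e.
  by rewrite -e mulfK ?hbb.
move=> b bB; by rewrite dot_glue // ffunE bB divfK ?hbb // addrN.
Qed.

Lemma onS_k0 a : onS B (k0 a).
Proof. by apply/forallP => j; apply/implyP => jB; rewrite ffunE (negbTE jB). Qed.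

Lemma sel_k0 k a : onS A a -> (onS B k && chk (glue B k a)) = (k == k0 a).
Proof.
move=> aA; case kB: (onS B k); first by rewrite /= chk_glue_k0.
by apply/esym/negbTE; apply: contraFN kB => /eqP ->; apply: onS_k0.
Qed.

Lemma card_Sk k a : onS A a ->
  #|[set u | onS E u && (onS B k && chk u && (a == Tm k u))]| = ((onS B k && chk (glue B k a)) * NB)%N.
Proof.
move=> aA; case kB: (onS B k); last first.
  rewrite /= mul0n; apply/eqP; rewrite cards_eq0; apply/eqP/setP => u.
  by rewrite !inE andbF.
case cg: (chk (glue B k a)); last first.
  rewrite /= mul0n; apply/eqP; rewrite cards_eq0; apply/eqP/setP => u.
  rewrite !inE /=; apply/negP; case/and3P => uE cu /eqP aT.
  by move: cg; rewrite aT glueT // chk_corr cu.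
rewrite /= mul1n /NB -(card_in_imset (f := Phi k a)); last first.
  move=> z1 z2; rewrite !inE => z1B z2B eq; apply/ffunP => j; case jB: (j \in B).
    by have := congr1 (fun f : wd => f j) eq; rewrite !ffunE jB.
  by rewrite (onSP z1B) ?jB // (onSP z2B) ?jB.
apply: eq_card => u; rewrite inE /=; apply/idP/imsetP.
  case/and3P => uE cu /eqP aT.
  exists (restr B u); first by rewrite inE onS_restr.
  apply/ffunP => j; rewrite ffunE restrE; case jB: (j \in B) => //.
  case jA: (j \in A); last by rewrite (onSP uE) // notAB ?jA ?jB.
  rewrite aT ffunE jA (@corr_eqB k (restr B u) u) ?addrK // => b bB.
  by rewrite restrE bB.
case=> z; rewrite inE => zB ->.
have PE : onS E (Phi k a z).
  apply/forallP => j; apply/implyP => jE; rewrite ffunE.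
  have -> : (j \in B) = false by apply/negP => /BE; rewrite (negbTE jE).
  by have -> : (j \in A) = false by apply/negP => /AE; rewrite (negbTE jE).
have PT : Tm k (Phi k a z) = a.
  apply/ffunP => j; rewrite ffunE; case jA: (j \in A); last by rewrite (onSP aA) ?jA.
  rewrite ffunE (negbTE (AB jA)) jA (@corr_eqB k (Phi k a z) z) ?subrK // => b bB.
  by rewrite ffunE bB.
have PC : chk (Phi k a z).
  by rewrite -(chk_corr k) -glueT // PT.
by rewrite PE PT PC eqxx.
Qed.

Lemma count_total a : onS A a ->
  \sum_k \sum_(u | onS E u) ((onS B k && chk u && (a == Tm k u)) : nat) = NB.
Proof.
move=> aA.
rewrite (eq_bigr (fun k => ((k == k0 a) * NB)%N)); last first.
  move=> k _; rewrite -sel_k0 // -card_Sk // big_mkcond /= -sum_cnt.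
  by apply: eq_bigr => u _; case: (onS E u).
rewrite -big_distrl /= sum_cnt.
have -> : [set k | k == k0 a] = [set k0 a] by apply/setP => k; rewrite !inE.
by rewrite cards1 mul1r.
Qed.

Lemma tp : kraus_tp A E Kops.
Proof.
move=> a a' aA aA'; rewrite /Kops (sum_enum (fun k => \sum_(u | onS E u) (Kr k u a)^* * Kr k u a')).
case: (eqVneq a a') => [<-|neq].
  under eq_bigr => k _ do under eq_bigr => u _ do
    rewrite /Kr rmorphM /= cc_conj conjC_nat mulrACA -natrM mulnb andbb cc_sq.
  under eq_bigr => k _ do rewrite -big_distrr /= -natr_sum.
  by rewrite -big_distrr /= -natr_sum count_total // mulVf ?NB_neq0 ?eqxx.
rewrite big1 // => k _; apply: big1 => u _; rewrite /Kr.
case E1: (a == Tm k u); case E2: (a' == Tm k u); rewrite ?andbF ?mulr0 ?conjC0 ?mul0r //.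
by rewrite (eqP E1) (eqP E2) eqxx in neq.
Qed.

Lemma abstract_recovery : exists (n : nat) (K : 'I_n -> qop F Q Cf),
  kraus_tp A E K /\ forall rho, code_state (inCSS C C) rho ->
     forall x x', apply_rec_id A E K (ptrace B rho) x x' = rho x x'.
Proof. exists #|wd|, Kops; split; [exact: tp | exact: rec_correct]. Qed.

End Abs.
Lemma card_natr0 (F : finFieldType) : (#|F|%:R : F) = 0.
Proof.
have := erefl (\sum_(x : F) x).
rewrite {2}(reindex_inj (addIr 1)) /= big_split /= sumr_const => /eqP.
move=> /eqP; rewrite -{1}[\sum_x x]addr0 => /addrI H; rewrite [RHS]H; congr (_%:R); apply: eq_card => x.
Qed.

Lemma geom_aux (K : fieldType) (y : K) (r m : nat) : (2 <= r)%N ->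
  \sum_(0 <= j < m * r) (if (j %% r == 1)%N then y ^+ j.-1 else 0) = \sum_(k < m) (y ^+ r) ^+ k.
Proof.
move=> r2; rewrite big_nat_mul big_mkord; apply: eq_bigr => k _.
rewrite mulSn -{1}[(k * r)%N]add0n big_addn addnK big_mkord.
have r1 : (1 < r)%N by apply: leq_trans r2.
rewrite (bigD1 (Ordinal r1)) //= big1 ?addr0.
  by rewrite addnC modnMDl modn_small // eqxx /= add0n -exprM mulnC.
move=> i /eqP ni; rewrite addnC modnMDl modn_small //.
by case: eqP => // e; case: ni; apply: val_inj.
Qed.

Lemma geom_sum (K : fieldType) (z : K) n : z ^+ n = 1 ->
  \sum_(k < n) z ^+ k = if z == 1 then n%:R else 0.
Proof.
move=> H; case: eqP => [->|nz].
  by under eq_bigr do rewrite expr1n; rewrite sumr_const card_ord.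
have := subrX1 z n; rewrite H subrr => /esym /eqP; rewrite mulf_eq0 subr_eq0.
by case: eqP => //= _ /eqP.
Qed.

Lemma mod_mul_aux a b mm rr N0 : (0 < rr)%N -> N0 = (mm * rr)%N ->
  (a * rr == b * rr %[mod N0])%N = (a == b %[mod mm])%N.
Proof. by move=> r0 ->; rewrite -!muln_modl eqn_pmul2r. Qed.

Section Conc.
Variables (F : finFieldType) (r s : nat) (w : F).
Local Notation N := (#|F|.-1).
Local Notation m := (N %/ r)%N.
Local Notation M := (N %/ s)%N.
Local Notation m' := (m %/ s)%N.
Hypotheses (hr : (r %| N)%N) (r3 : (3 <= r)%N) (hs : (s %| m)%N) (hw : N.-primitive_root w).

Lemma N_gt0 : (0 < N)%N.
Proof. exact: prim_order_gt0 hw. Qed.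
Lemma Nm : N = (m * r)%N.
Proof. by rewrite divnK. Qed.
Lemma r_gt0 : (0 < r)%N.
Proof. by apply: leq_trans r3. Qed.
Lemma m_gt0 : (0 < m)%N.
Proof. by have := N_gt0; rewrite [in X in X -> _]Nm muln_gt0 => /andP[]. Qed.
Lemma s_gt0 : (0 < s)%N.
Proof.
rewrite lt0n; apply/negP => /eqP s0; move: hs; rewrite s0 dvd0n => /eqP m0.
by have := m_gt0; rewrite m0.
Qed.
Lemma ms : m = (m' * s)%N.
Proof. by rewrite divnK. Qed.
Lemma m'_gt0 : (0 < m')%N.
Proof. by have := m_gt0; rewrite [in X in X -> _]ms muln_gt0 => /andP[]. Qed.
Lemma NM : N = (M * s)%N.
Proof. by rewrite divnK // (dvdn_trans hs) // {2}Nm dvdn_mulr. Qed.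
Lemma Mm' : M = (m' * r)%N.
Proof.
have e : N = (m' * r * s)%N by rewrite {1}Nm {1}ms mulnAC.
by rewrite {1}e mulnK // s_gt0.
Qed.

Lemma w0 : w != 0.
Proof.
apply/negP => /eqP w0; have := prim_expr_order hw.
by rewrite w0 expr0n; case: (N) N_gt0 => // n _ /eqP; rewrite eq_sym oner_eq0.
Qed.

Lemma xN (x : F) : x != 0 -> x ^+ N = 1.
Proof.
move=> x0; have := expf_card x; have cF : #|F| = N.+1.
  by rewrite prednK // (leq_trans _ (finNzRing_gt1 F)).
by move=> H; apply: (mulIf x0); rewrite mul1r -exprSr -cF.
Qed.

Definition ex (p : Fstar F) : 'I_N := sval (prim_rootP hw (xN (valP p))).
Lemma exE p : val p = w ^+ ex p.
Proof. exact: svalP (prim_rootP hw (xN (valP p))). Qed.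

Lemma expw_inj e1 e2 : (e1 < N)%N -> (e2 < N)%N -> w ^+ e1 = w ^+ e2 -> e1 = e2.
Proof.
move=> h1 h2 /eqP; rewrite (eq_prim_root_expr hw) !modn_small // => /eqP //.
Qed.

Lemma sum_pow e : ~~ (N %| e)%N -> \sum_(p : Fstar F) (val p) ^+ e = 0.
Proof.
move=> ndv; set S := \sum_p _.
have mulw : forall p : Fstar F, w * val p != 0 := fun p => mulf_neq0 w0 (valP p).
pose sg (p : Fstar F) : Fstar F := exist _ (w * val p) (mulw p).
have sg_inj : injective sg by move=> p q /(congr1 val) /= /(mulfI w0) /val_inj.
have : S = w ^+ e * S.
  rewrite {1}/S (reindex_inj sg_inj) /= mulr_sumr; apply: eq_bigr => p _.
  by rewrite exprMn.
move/eqP; rewrite -subr_eq0 -{1}(mul1r S) -mulrBl mulf_eq0 subr_eq0 eq_sym.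
by rewrite -(prim_order_dvd hw) (negbTE ndv) /= => /eqP.
Qed.

Definition blk (p : Fstar F) := (ex p %/ s)%N.
Lemma blk_lt p : (blk p < M)%N.
Proof. by rewrite ltn_divLR ?s_gt0 // -NM ltn_ord. Qed.
Definition blkO p : 'I_M := Ordinal (blk_lt p).

Lemma in_region (p : Fstar F) (J : {set 'I_M}) : (p \in @fold_region F w s J) = (blkO p \in J).
Proof.
rewrite inE; apply/existsP/idP => [[j /andP[jJ /existsP[t /eqP e]]] | H].
  have ee : (ex p : nat) = (s * j + t)%N.
    apply: expw_inj; [exact: ltn_ord | | by rewrite -exE].
    have := ltn_ord j; have := ltn_ord t; have := NM; nia.
  have -> : blkO p = j.
    by apply: val_inj => /=; rewrite /blk ee mulnC divnMDl ?s_gt0 // (divn_small (ltn_ord t)) addn0.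
  exact: jJ.
exists (blkO p); rewrite H /=; apply/existsP; exists (Ordinal (ltn_pmod (ex p) s_gt0)).
by rewrite exE /= /blk; apply/eqP; congr (w ^+ _); rewrite mulnC -divn_eq.
Qed.

Definition cf (b : Fstar F) : {ffun 'I_N -> F} :=
  [ffun j : 'I_N => if (j %% r == 1)%N then (val b ^+ j.-1)^-1 else 0].
Definition hh (b : Fstar F) : word F (Fstar F) :=
  [ffun p : Fstar F => \sum_(i < N) cf b i * (val p) ^+ i].

Lemma h_in l b : hh b \in TB_code F r l.
Proof.
rewrite inE; apply/existsP; exists (cf b); rewrite eqxx andbT.
apply/forallP => j; apply/implyP; rewrite ffunE /TB_S; case: ifP => // jr.
by rewrite ltn_ord orbT.
Qed.

Lemma ndvd_aux i j : (i %% r != r.-1)%N -> (j %% r == 1)%N -> ~~ (N %| i + j)%N.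
Proof.
move=> hi /eqP hj; apply: contra (_ : ~~ (r %| i + j)%N); first exact: dvdn_trans.
rewrite /dvdn -modnDm hj modn_small.
  by rewrite addn1.
have := ltn_pmod i r_gt0; move: hi; set x := (i %% r)%N; move=> hi hx.
have : x != r.-1 := hi; lia.
Qed.

Lemma h_dual l b : hh b \in dual (TB_code F r l).
Proof.
rewrite inE; apply/forall_inP => c; rewrite inE => /existsP[a /andP[/forallP aS /eqP ->]].
apply/eqP.
transitivity (\sum_(i < N) \sum_(j < N) a i * cf b j * \sum_(p : Fstar F) (val p) ^+ (i + j)).
  under eq_bigr => p _ do rewrite !ffunE mulr_suml.
  rewrite exchange_big; apply: eq_bigr => i _.
  under eq_bigr => p _ do rewrite mulr_sumr.
  rewrite exchange_big; apply: eq_bigr => j _.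
  rewrite mulr_sumr; apply: eq_bigr => p _; rewrite exprD; ring.
apply: big1 => i _; apply: big1 => j _.
case: (eqVneq (a i) 0) => [->|ai]; first by rewrite !mul0r.
case: (eqVneq (cf b j) 0) => [->|cj]; first by rewrite mulr0 mul0r.
rewrite sum_pow ?mulr0 //; apply: ndvd_aux.
  have := aS i; rewrite (negbTE ai) implybF negbK /TB_S => /orP[/andP[_ //]|/andP[_ /eqP ->]].
  by case: (r) r3 => // [[|[|rr]]].
by move: cj; rewrite ffunE; case: ifP => // _; rewrite eqxx.
Qed.

Lemma hval b p : hh b p = if (ex p %% m == ex b %% m)%N then m%:R * val p else 0.
Proof.
set y := val p / val b.
have b0 : val b != 0 := valP b.
have step1 : hh b p = val p * \sum_(j < N) (if (j %% r == 1)%N then y ^+ j.-1 else 0).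
  rewrite ffunE mulr_sumr; apply: eq_bigr => j _; rewrite ffunE.
  case: ifP => jr; last by rewrite mul0r mulr0.
  have j0 : (0 < j)%N by case: (nat_of_ord j) jr => //; rewrite mod0n.
  rewrite -[in val p ^+ j](prednK j0) exprS /y exprMn exprVn; ring.
have step2 : \sum_(j < N) (if (j %% r == 1)%N then y ^+ j.-1 else 0) = \sum_(k < m) (y ^+ r) ^+ k.
  rewrite -(big_mkord xpredT (fun j => if (j %% r == 1)%N then y ^+ j.-1 else 0)).
  by rewrite {1}Nm geom_aux // (leq_trans _ r3).
have zm : (y ^+ r) ^+ m = 1.
  by rewrite -exprM mulnC -Nm /y exprMn exprVn (xN (valP p)) (xN b0) divr1.
have step5 : (y ^+ r == 1) = (ex p %% m == ex b %% m)%N.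
  have br0 : val b ^+ r != 0 by rewrite expf_neq0.
  rewrite /y exprMn exprVn -(inj_eq (mulIf br0)) mulrVK ?unitfE // mul1r.
  rewrite !exE -!exprM (eq_prim_root_expr hw).
  exact: mod_mul_aux r_gt0 Nm.
rewrite step1 step2 geom_sum // step5; case: ifP => _; last by rewrite mulr0.
by rewrite mulrC.
Qed.

Lemma mF0 : (m%:R : F) != 0.
Proof.
have cF : #|F| = N.+1 by rewrite prednK // (leq_trans _ (finNzRing_gt1 F)).
have e1 : (N%:R : F) = - 1.
  by apply/eqP; rewrite -addr_eq0 -mulrSr -cF card_natr0.
have e2 : (N%:R : F) = m%:R * r%:R by rewrite -natrM -Nm.
apply/eqP => m0; move: e1; rewrite e2 m0 mul0r => /eqP.
by rewrite eq_sym oppr_eq0 oner_eq0.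
Qed.

Lemma hbb b : hh b b != 0.
Proof. by rewrite hval eqxx mulf_neq0 ?mF0 //; exact: (valP b). Qed.

Lemma blk_set1 (b : Fstar F) (i : 'I_M) : b \in @fold_region F w s [set i] -> (ex b %/ s)%N = i.
Proof. by rewrite in_region in_set1 => /eqP <-. Qed.

Lemma hbb' (i : 'I_M) b b' : b \in @fold_region F w s [set i] -> b' \in @fold_region F w s [set i] ->
  b' != b -> hh b b' = 0.
Proof.
move=> /blk_set1 bi /blk_set1 b'i nb; rewrite hval; case: ifP => // e.
case/eqP: nb; apply: val_inj; rewrite !exE; congr (w ^+ _).
have e' : (ex b' %% s = ex b %% s)%N.
  by rewrite -(modn_dvdm _ hs) (eqP e) modn_dvdm.
by rewrite (divn_eq (ex b') s) (divn_eq (ex b) s) e' bi b'i.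
Qed.

Definition Iset (i : 'I_M) : {set 'I_M} := [set j : 'I_M | (j %% m' == i %% m')%N].

Lemma hsupp (i : 'I_M) b p : b \in @fold_region F w s [set i] ->
  p \notin @fold_region F w s (Iset i) -> hh b p = 0.
Proof.
move=> /blk_set1 bi; rewrite in_region inE /= hval; case: ifP => // e.
by rewrite /blk modn_divl -ms (eqP e) (divn_modl _ hs) bi eqxx.
Qed.

Lemma card_I (i : 'I_M) : (#|Iset i| <= r)%N.
Proof.
have lt j : ((j : 'I_M) %/ m' < r)%N by rewrite ltn_divLR ?m'_gt0 // mulnC -Mm' ltn_ord.
pose g (j : 'I_M) : 'I_r := Ordinal (lt j).
have ginj : {in Iset i &, injective g}.
  move=> j1 j2; rewrite !inE => /eqP h1 /eqP h2 /(congr1 val) /= e.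
  by apply: val_inj; rewrite /= (divn_eq j1 m') (divn_eq j2 m') e h1 h2.
rewrite -(card_in_imset ginj); exact: leq_trans (max_card _) (eq_leq (card_ord r)).
Qed.

End Conc.
Theorem corollary5p10 (F : finFieldType) (Cf : numClosedFieldType)
    (r l s : nat) (w : F) :
  (r %| #|F|.-1)%N -> (3 <= r)%N ->
  (#|F| <= 2 * l)%N -> (l <= #|F|.-1)%N ->
  (s %| #|F|.-1 %/ r)%N ->
  (#|F|.-1).-primitive_root w ->
  folded_TB_QLRC r l Cf w s.
Proof.
move=> hr r3 _ _ hs hw i.
exists (Iset r i); split.
- by rewrite inE eqxx.
- exact: card_I hr hs hw i.
- apply: (@abstract_recovery _ _ Cf (TB_code F r l) _ _ _ (hh r)).
  + apply/setP => p; rewrite in_setD !(in_region hr r3 hs hw) in_setD1 in_set1.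
    by rewrite andbC.
  + apply/subsetP => p; rewrite !(in_region hr r3 hs hw) in_set1 => /eqP ->.
    by rewrite inE eqxx.
  + move=> b _; exact: h_in.
  + move=> b _; exact: (h_dual hr r3 hs hw).
  + move=> b j bB jE; exact: (hsupp hr r3 hs hw bB jE).
  + move=> b _; exact: (hbb hr r3 hw).
  + move=> b b' bB b'B nb; exact: (hbb' hr r3 hs hw bB b'B nb).
Qed.
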